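(* Let $N,K\ge 2$ ... more precisely, let $N\ge1$, $K\ge 1$, and let $\mathcal{P}$ be a probability distribution on pairs $(a_h,f_h)\in\mathcal{A}\times\mathcal{F}\subseteq\mathbb{R}^N\times\mathbb{R}^N$. For each $(a_h,f_h)$ let $\mathcal{L}_h^a\in\mathbb{R}^{N\times N}$ be the associated linear discrete operator, let $u_h=\mathcal{G}_h(a_h,f_h)$ be the discrete solution (a measurable function of $(a_h,f_h)$), and let $u_h^{(t)}=U_t(a_h,f_h)\in\mathcal{U}$ be the current iterate, a fixed measurable function of $(a_h,f_h)$. Let $C_1,\dots,C_K:\mathbb{R}^N\to\mathbb{R}^N$ be arbitrary (measurable) solver maps and set $$\tilde c_j=\tilde c_j(a_h,u_h^{(t)},u_h)=\bigl\|(I-C_j\circ\mathcal{L}_h^a)(u_h-u_h^{(t)})\bigr\|_2^2,\quad j\in[K].$$ Assume there are constants $0<E_{\min}$ and $\bar E<\infty$ such that, for $\mathcal{P}$-almost every $(a_h,f_h)$, $\tilde c_j<\bar E$ for all $j\in[K]$ and $\tilde c_j>E_{\min}$ for at least one $j\in[K]$. Then $\Psi$ is a Bayes-consistent surrogate for $l_{\text{route}}$: for every sequence of measurable score functions $\mathbf g_n=(g_{n,1},\dots,g_{n,K})$ with $\mathcal{R}_\Psi(\mathbf g_n)\to\mathcal{R}_\Psi^*$, the induced routers $r_n=\operatorname{argmax}_{j\in[K]}g_{n,j}$ satisfy $\mathcal{R}_{\text{route}}(r_n)\to\mathcal{R}_{\text{route}}^*$.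
   Context: Inputs are $x=(a_h,f_h,u_h^{(t)})\in\mathcal{A}\times\mathcal{F}\times\mathcal{U}$. A score function is $\mathbf g=(g_1,\dots,g_K)$ with $g_j:\mathcal{A}\times\mathcal{F}\times\mathcal{U}\to\mathbb{R}$; its induced router is $r(x)=\operatorname{argmax}_{j\in[K]}g_j(x)$ (ties broken by any fixed rule). The routing loss is $l_{\text{route}}(r,a_h,f_h,u_h^{(t)},u_h)=\sum_{j=1}^K\tilde c_j\,\mathbf 1_{r(a_h,f_h,u_h^{(t)})=j}$, and the surrogate loss is $$\Psi(\mathbf g,a_h,f_h,u_h^{(t)},u_h)=-\sum_{j=1}^K\sum_{k=1}^K\tilde c_k\,\mathbf 1_{k\ne j}\log\left(\frac{\exp(g_j(a_h,f_h,u_h^{(t)}))}{\sum_{m=1}^K\exp(g_m(a_h,f_h,u_h^{(t)}))}\right).$$ Risks: $\mathcal{R}_{\text{route}}(r)=\mathbb{E}_{(a_h,f_h)\sim\mathcal{P}}[l_{\text{route}}(r,a_h,f_h,u_h^{(t)},u_h)]$ and $\mathcal{R}_\Psi(\mathbf g)=\mathbb{E}_{(a_h,f_h)\sim\mathcal{P}}[\Psi(\mathbf g,a_h,f_h,u_h^{(t)},u_h)]$, with $u_h^{(t)}=U_t(a_h,f_h)$ and $u_h=\mathcal{G}_h(a_h,f_h)$; $\mathcal{R}_{\text{route}}^*$ and $\mathcal{R}_\Psi^*$ denote the infima of these risks over all measurable routers, resp. all measurable score functions. *)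

(* Defs.v *)
From HB Require Import structures.
From mathcomp Require Import all_boot all_order all_algebra.
From mathcomp Require Import all_classical all_reals all_analysis.
Set Implicit Arguments. Unset Strict Implicit. Unset Printing Implicit Defensive.
Import Order.TTheory GRing.Theory Num.Theory.
Local Open Scope classical_set_scope.
Local Open Scope ring_scope.

(* R^N is modelled by N.-tuple R, which carries the product (= Borel)
   sigma-algebra of MathComp-Analysis. *)

Definition sqnorm (R : realType) (N : nat) (v : N.-tuple R) : R :=
  \sum_(i < N) tnth v i ^+ 2.

Definition vsub (R : realType) (N : nat) (v w : N.-tuple R) : N.-tuple R :=
  [tuple tnth v i - tnth w i | i < N].

Definition matvec (R : realType) (N : nat) (M : 'M[R]_N) (v : N.-tuple R)
  : N.-tuple R :=
  [tuple \sum_(j < N) M i j * tnth v j | i < N].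

Definition cost (R : realType) (N K : nat)
  (L : N.-tuple R -> 'M[R]_N)
  (C : 'I_K -> N.-tuple R -> N.-tuple R)
  (G Ut : N.-tuple R * N.-tuple R -> N.-tuple R)
  (j : 'I_K) (af : N.-tuple R * N.-tuple R) : R :=
  let w := vsub (G af) (Ut af) in
  sqnorm (vsub w (C j (matvec (L af.1) w))).

Definition route_loss (R : realType) (K : nat) (c : 'I_K -> R) (j : 'I_K) : R :=
  \sum_(k < K) c k * (j == k)%:R.

Definition psi_loss (R : realType) (K : nat) (c : 'I_K -> R) (s : 'I_K -> R) : R :=
  - \sum_(j < K) \sum_(k < K)
      c k * (k != j)%:R * ln (expR (s j) / \sum_(m < K) expR (s m)).

Definition input (R : realType) (N : nat)
  (Ut : N.-tuple R * N.-tuple R -> N.-tuple R) (af : N.-tuple R * N.-tuple R)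
  : N.-tuple R * N.-tuple R * N.-tuple R :=
  (af.1, af.2, Ut af).

(* a router with values in the finite set [K] is measurable iff every
   fibre is measurable *)
Definition measurable_router (R : realType) (N K : nat)
  (r : N.-tuple R * N.-tuple R * N.-tuple R -> 'I_K) : Prop :=
  forall j : 'I_K, measurable (r @^-1` [set j]).

Definition measurable_score (R : realType) (N K : nat)
  (g : 'I_K -> N.-tuple R * N.-tuple R * N.-tuple R -> R) : Prop :=
  forall j : 'I_K, measurable_fun setT (g j).

(* j is a maximiser of the score vector s (j = argmax s, ties arbitrary) *)
Definition is_argmax (R : realType) (K : nat) (s : 'I_K -> R) (j : 'I_K) : Prop :=
  forall k : 'I_K, s k <= s j.

Section Risks.
Variables (R : realType) (N K : nat).
Variable (P : probability (N.-tuple R * N.-tuple R)%type R).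
Variable (c : 'I_K -> N.-tuple R * N.-tuple R -> R).
Variable (Ut : N.-tuple R * N.-tuple R -> N.-tuple R).

Definition route_risk (r : N.-tuple R * N.-tuple R * N.-tuple R -> 'I_K)
  : \bar R :=
  (\int[P]_af (route_loss (fun k => c k af) (r (input Ut af)))%:E)%E.

Definition psi_risk (g : 'I_K -> N.-tuple R * N.-tuple R * N.-tuple R -> R)
  : \bar R :=
  (\int[P]_af (psi_loss (fun k => c k af) (fun j => g j (input Ut af)))%:E)%E.

Definition route_risk_star : \bar R :=
  ereal_inf [set route_risk r | r in [set r | measurable_router r]].

Definition psi_risk_star : \bar R :=
  ereal_inf [set psi_risk g | g in [set g | measurable_score g]].

End Risks.

(* Main.v *)
Require Import Defs.
From HB Require Import structures.
From mathcomp Require Import all_boot all_order all_algebra.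
From mathcomp Require Import all_classical all_reals all_analysis.
From mathcomp Require Import ring lra.
From mathcomp Require Import measurable_realfun.
Import Order.TTheory GRing.Theory Num.Theory.
Local Open Scope classical_set_scope.
Local Open Scope ring_scope.
Set Implicit Arguments. Unset Strict Implicit. Unset Printing Implicit Defensive.

Definition wt (R : realType) (K : nat) (c : 'I_K -> R) (j : 'I_K) : R :=
  \sum_(k < K) c k * (k != j)%:R.
Definition Wt (R : realType) (K : nat) (c : 'I_K -> R) : R := \sum_(j < K) wt c j.
Definition pstar (R : realType) (K : nat) (c : 'I_K -> R) : R :=
  - \sum_(j < K) wt c j * ln (wt c j / Wt c).
Definition sm (R : realType) (K : nat) (s : 'I_K -> R) (j : 'I_K) : R :=
  expR (s j) / \sum_(m < K) expR (s m).

Lemma psi_lossE (R : realType) (K : nat) (c s : 'I_K -> R) :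
  psi_loss c s = - \sum_(j < K) wt c j * ln (sm s j).
Proof.
rewrite /psi_loss; congr (- _); apply: eq_bigr => j _.
by rewrite /wt big_distrl.
Qed.

Lemma wtE (R : realType) (K : nat) (c : 'I_K -> R) j :
  wt c j = \sum_(k < K) c k - c j.
Proof.
rewrite /wt (bigD1 j) //= eqxx mulr0 add0r [in RHS](bigD1 j) //= addrC addrK.
by apply: eq_bigr => k ->; rewrite mulr1.
Qed.

Lemma wt_ge0 (R : realType) (K : nat) (c : 'I_K -> R) j :
  (forall k, 0 <= c k) -> 0 <= wt c j.
Proof. by move=> c0; apply: sumr_ge0 => k _; rewrite mulr_ge0. Qed.

Lemma wt_leW (R : realType) (K : nat) (c : 'I_K -> R) j :
  (forall k, 0 <= c k) -> wt c j <= Wt c.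
Proof.
move=> c0; rewrite /Wt (bigD1 j) //= lerDl; apply: sumr_ge0 => k _.
exact: wt_ge0.
Qed.


Lemma route_lossE (R : realType) (K : nat) (c : 'I_K -> R) j :
  route_loss c j = c j.
Proof.
rewrite /route_loss (bigD1 j) //= eqxx mulr1 big1 ?addr0 // => k kj.
by rewrite eq_sym (negbTE kj) mulr0.
Qed.

Lemma sm_gt0 (R : realType) (K : nat) (s : 'I_K -> R) j : 0 < sm s j.
Proof.
rewrite /sm divr_gt0 ?expR_gt0 //.
by rewrite (bigD1 j) //= ltr_wpDr ?expR_gt0 // sumr_ge0 // => m _; rewrite ltW ?expR_gt0.
Qed.

Lemma sm_sum (R : realType) (K : nat) (s : 'I_K -> R) (hK : (0 < K)%N) :
  \sum_(j < K) sm s j = 1.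
Proof.
rewrite /sm -mulr_suml divff //.
rewrite gt_eqF // (bigD1 (Ordinal hK)) //= ltr_wpDr ?expR_gt0 //.
by rewrite sumr_ge0 // => m _; rewrite ltW ?expR_gt0.
Qed.

Lemma ln_le_sub1 (R : realType) (x : R) : 0 < x -> ln x <= x - 1.
Proof.
move=> x0; have := @le_ln1Dx R (x - 1); rewrite [1 + _]addrC subrK; apply.
lra.
Qed.

Lemma term1 (R : realType) (w W p : R) : 0 <= w -> w <= W -> 0 < p ->
  2 * w - 2 * (Num.sqrt w * Num.sqrt (W * p)) <= w * (ln (w / W) - ln p).
Proof.
move=> w0 wW p0; have [->|wn0] := eqVneq w 0.
  by rewrite sqrtr0 !(mul0r, mulr0) subrr.
have wp : 0 < w by rewrite lt_neqAle eq_sym wn0.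
have Wp : 0 < W by apply: lt_le_trans wW.
set a := Num.sqrt w; set b := Num.sqrt (W * p).
have ap : 0 < a by rewrite sqrtr_gt0.
have bp : 0 < b by rewrite sqrtr_gt0 mulr_gt0.
have wa : w = a ^+ 2 by rewrite sqr_sqrtr // ltW.
have Wpb : W * p = b ^+ 2 by rewrite sqr_sqrtr // ltW // mulr_gt0.
have -> : ln (w / W) - ln p = - (ln (b / a) *+ 2).
  rewrite -lnXn ?divr_gt0 // expr_div_n -wa -Wpb.
  rewrite ln_div ?posrE // [ln (W * p / w)]ln_div ?posrE ?mulr_gt0 //.
  rewrite lnM ?posrE //; lra.
have hl := ln_le_sub1 (divr_gt0 bp ap).
have h2 : w * ln (b / a) <= a * b - w.
  rewrite (le_trans (ler_wpM2l w0 hl)) // wa.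
  have -> : a ^+ 2 * (b / a - 1) = a * b - a ^+ 2 by field; rewrite gt_eqF.
  by [].
have -> : w * (ln (b / a) *- 2) = - 2 * (w * ln (b / a)) by ring.
lra.
Qed.

Lemma excessE (R : realType) (K : nat) (c s : 'I_K -> R) :
  psi_loss c s - pstar c =
  \sum_(j < K) wt c j * (ln (wt c j / Wt c) - ln (sm s j)).
Proof.
rewrite psi_lossE /pstar opprK addrC -sumrB; apply: eq_bigr => j _.
by rewrite mulrBr.
Qed.

Lemma sumsq (R : realType) (K : nat) (c s : 'I_K -> R) (hK : (0 < K)%N) :
  (forall k, 0 <= c k) ->
  \sum_(j < K) (Num.sqrt (wt c j) - Num.sqrt (Wt c * sm s j)) ^+ 2
    <= psi_loss c s - pstar c.
Proof.
move=> c0; rewrite excessE.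
have W0 : 0 <= Wt c by apply: sumr_ge0 => j _; exact: wt_ge0.
have -> : \sum_(j < K) (Num.sqrt (wt c j) - Num.sqrt (Wt c * sm s j)) ^+ 2 =
    \sum_(j < K) (2 * wt c j - 2 * (Num.sqrt (wt c j) * Num.sqrt (Wt c * sm s j))).
  apply/eqP; rewrite -subr_eq0 -sumrB.
  have -> : \sum_(j < K) ((Num.sqrt (wt c j) - Num.sqrt (Wt c * sm s j)) ^+ 2 -
      (2 * wt c j - 2 * (Num.sqrt (wt c j) * Num.sqrt (Wt c * sm s j)))) =
      \sum_(j < K) (Wt c * sm s j - wt c j).
    apply: eq_bigr => j _.
    rewrite sqrrB (sqr_sqrtr (wt_ge0 _ c0)) (sqr_sqrtr (mulr_ge0 W0 (ltW (sm_gt0 s j)))).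
    set a := Num.sqrt _; set b := Num.sqrt _; rewrite -mulr_natr; ring.
  by rewrite big_split /= sumrN -mulr_sumr sm_sum // mulr1 /Wt subrr.
have H j : 2 * wt c j - 2 * (Num.sqrt (wt c j) * Num.sqrt (Wt c * sm s j)) <=
    wt c j * (ln (wt c j / Wt c) - ln (sm s j)).
  by apply: term1; [exact: wt_ge0|exact: wt_leW|exact: sm_gt0].
exact: (ler_sum _ (fun j _ => H j)).
Qed.

Lemma psi_ge_pstar (R : realType) (K : nat) (c s : 'I_K -> R) (hK : (0 < K)%N) :
  (forall k, 0 <= c k) -> pstar c <= psi_loss c s.
Proof.
move=> c0; rewrite -subr_ge0; apply: le_trans (sumsq s hK c0).
by apply: sumr_ge0 => j _; exact: sqr_ge0.
Qed.

Lemma pstar_ge0 (R : realType) (K : nat) (c : 'I_K -> R) :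
  (forall k, 0 <= c k) -> 0 <= pstar c.
Proof.
move=> c0; rewrite /pstar oppr_ge0; apply: sumr_le0 => j _.
rewrite mulr_ge0_le0 ?wt_ge0 //; apply: ln_le0.
have [W0|Wn0] := eqVneq (Wt c) 0; first by rewrite W0 invr0 mulr0.
have Wp : 0 < Wt c.
  by rewrite lt_neqAle eq_sym Wn0 /=; apply: sumr_ge0 => k _; exact: wt_ge0.
by rewrite ler_pdivrMr // mul1r wt_leW.
Qed.

Lemma pstar_le (R : realType) (K : nat) (c : 'I_K -> R) :
  (forall k, 0 <= c k) -> pstar c <= K%:R * Wt c.
Proof.
move=> c0; rewrite /pstar -sumrN.
have -> : K%:R * Wt c = \sum_(j < K) Wt c by rewrite sumr_const card_ord mulr_natl.
apply: ler_sum => j _.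
have [->|wn0] := eqVneq (wt c j) 0; first by rewrite mul0r oppr0 /Wt sumr_ge0 // => k _; exact: wt_ge0.
have wp : 0 < wt c j by rewrite lt_neqAle eq_sym wn0 wt_ge0.
have Wp : 0 < Wt c by exact: lt_le_trans wp (wt_leW j c0).
have := ln_le_sub1 (divr_gt0 Wp wp).
rewrite -invf_div lnV ?posrE ?divr_gt0 // => h.
have : wt c j * (- ln (wt c j / Wt c)) <= wt c j * (Wt c / wt c j - 1).
  by rewrite invf_div in h; rewrite ler_pM2l.
have e : wt c j * (Wt c / wt c j - 1) = Wt c - wt c j by field.
rewrite e mulrN => h2; lra.
Qed.

Lemma sm_le (R : realType) (K : nat) (s : 'I_K -> R) i j :
  s i <= s j -> sm s i <= sm s j.
Proof.
move=> hs; rewrite /sm ler_wpM2r ?ler_expR // invr_ge0.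
by apply: sumr_ge0 => m _; rewrite ltW ?expR_gt0.
Qed.

Lemma key_pt (R : realType) (K : nat) (c s : 'I_K -> R) (hK : (0 < K)%N)
  (r0 jst : 'I_K) : (forall k, 0 <= c k) -> (forall k, s k <= s r0) ->
  c jst <= c r0 ->
  (c r0 - c jst) ^+ 2 <= 8 * Wt c * (psi_loss c s - pstar c).
Proof.
move=> c0 hs hc.
have hE := sumsq s hK c0.
set E := psi_loss c s - pstar c in hE *.
have W0 : 0 <= Wt c by apply: sumr_ge0 => j _; exact: wt_ge0.
have sq0 : 0 <= \sum_(j < K) (Num.sqrt (wt c j) - Num.sqrt (Wt c * sm s j)) ^+ 2.
  by apply: sumr_ge0 => j _; exact: sqr_ge0.
have E0 : 0 <= E by apply: le_trans hE.
have [->|ne] := eqVneq jst r0.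
  by rewrite subrr expr0n /= mulr_ge0 // mulr_ge0.
have Deq : c r0 - c jst = wt c jst - wt c r0 by rewrite !wtE; lra.
set a := fun j => Num.sqrt (wt c j).
set b := fun j => Num.sqrt (Wt c * sm s j).
have hb : b jst <= b r0.
  by rewrite /b ler_wsqrtr // ler_wpM2l // sm_le.
have ha : a r0 <= a jst.
  by rewrite /a ler_wsqrtr // !wtE; lra.
have hsq : (a jst - b jst) ^+ 2 + (a r0 - b r0) ^+ 2 <= E.
  apply: le_trans hE.
  rewrite (bigD1 jst) //= (bigD1 r0) /=; last by rewrite eq_sym ne.
  rewrite addrA lerDl; apply: sumr_ge0 => j _; exact: sqr_ge0.
have aW j : a j <= Num.sqrt (Wt c) by rewrite /a ler_wsqrtr // wt_leW.
have a0 j : 0 <= a j by exact: sqrtr_ge0.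
have sW : Num.sqrt (Wt c) ^+ 2 = Wt c by rewrite sqr_sqrtr.
have sW0 : 0 <= Num.sqrt (Wt c) by exact: sqrtr_ge0.
have aa j : a j ^+ 2 = wt c j by rewrite /a sqr_sqrtr // wt_ge0.
set d := a jst - a r0.
set e := a jst + a r0.
have d0 : 0 <= d by rewrite /d subr_ge0.
have e0 : 0 <= e by rewrite /e addr_ge0.
have dle : d ^+ 2 <= 2 * E.
  have h1 : d <= (a jst - b jst) + (b r0 - a r0) by rewrite /d; lra.
  set u := a jst - b jst in h1 hsq; set v := b r0 - a r0 in h1.
  have hv : (a r0 - b r0) ^+ 2 = v ^+ 2 by rewrite /v -sqrrN opprB.
  rewrite hv in hsq.
  have h2 : d ^+ 2 <= (u + v) ^+ 2 by rewrite !expr2; apply: ler_pM.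
  have h3 : 0 <= (u - v) ^+ 2 by exact: sqr_ge0.
  have h4 : (u + v) ^+ 2 + (u - v) ^+ 2 = 2 * (u ^+ 2 + v ^+ 2) by ring.
  lra.
have ele : e ^+ 2 <= 4 * Wt c.
  have h1 : e <= 2 * Num.sqrt (Wt c) by have := aW jst; have := aW r0; rewrite /e; lra.
  rewrite -sW; nra.
have -> : c r0 - c jst = d * e by rewrite Deq /d /e -!aa; ring.
rewrite exprMn.
have -> : 8 * Wt c * E = (2 * E) * (4 * Wt c) by ring.
by apply: ler_pM => //; exact: sqr_ge0.
Qed.

Lemma psi_eta (R : realType) (K : nat) (c : 'I_K -> R) (hK : (0 < K)%N)
  (eta : R) : 0 < eta -> (forall k, 0 <= c k) ->
  psi_loss c (fun j => ln (wt c j + eta)) <= pstar c + K%:R * eta.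
Proof.
move=> eta0 c0; rewrite -lerBlDl excessE.
set W := Wt c.
have W0 : 0 <= W by apply: sumr_ge0 => j _; exact: wt_ge0.
have T0 : 0 <= K%:R * eta by rewrite mulr_ge0 // ltW.
have smE j : sm (fun j => ln (wt c j + eta)) j = (wt c j + eta) / (W + K%:R * eta).
  rewrite /sm lnK ?posrE; last by rewrite ltr_wpDl // wt_ge0.
  congr (_ / _); under eq_bigr => m _ do rewrite lnK ?posrE ?ltr_wpDl ?wt_ge0 //.
  by rewrite big_split /= sumr_const card_ord mulr_natl.
have [W00|Wn0] := eqVneq W 0.
  have w0 j : wt c j = 0.
    by apply/eqP; rewrite eq_le wt_ge0 // andbT -W00 wt_leW.
  by rewrite big1 // => j _; rewrite w0 mul0r.
have Wp : 0 < W by rewrite lt_neqAle eq_sym Wn0.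
have -> : K%:R * eta = \sum_(j < K) wt c j * (K%:R * eta / W).
  by rewrite -mulr_suml -/(Wt c) -/W mulrCA divff ?mulr1 // gt_eqF.
apply: ler_sum => j _; rewrite smE.
have [->|wn0] := eqVneq (wt c j) 0; first by rewrite !mul0r.
have wp : 0 < wt c j by rewrite lt_neqAle eq_sym wn0 wt_ge0.
rewrite ler_pM2l //.
have wep : 0 < wt c j + eta by rewrite addr_gt0.
have WTp : 0 < W + K%:R * eta by rewrite ltr_wpDr.
rewrite !ln_div ?posrE //.
have h1 : ln (wt c j) <= ln (wt c j + eta) by rewrite ler_ln ?posrE // lerDl ltW.
have h2 : ln (W + K%:R * eta) - ln W <= K%:R * eta / W.
  rewrite -ln_div ?posrE //.
  have -> : (W + K%:R * eta) / W = 1 + K%:R * eta / W by field; rewrite gt_eqF.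
  apply: le_ln1Dx; apply: (@lt_le_trans _ _ 0); first by rewrite ltrN10.
  by rewrite divr_ge0 // ltW.
lra.
Qed.

Lemma meas_vsub d (T : measurableType d) (R : realType) (N : nat)
  (f g : T -> N.-tuple R) : measurable_fun setT f -> measurable_fun setT g ->
  measurable_fun setT (fun x => vsub (f x) (g x)).
Proof.
move=> mf mg; apply/measurable_fun_tnthP => i.
have -> : (@tnth _ R ^~ i \o (fun x => vsub (f x) (g x))) =
    (fun x => tnth (f x) i - tnth (g x) i).
  by apply/funext => x /=; rewrite /vsub tnth_mktuple.
apply: measurable_realfun.measurable_funB.
  exact: (measurable_fun_tnthP f).1 mf i.
exact: (measurable_fun_tnthP g).1 mg i.
Qed.

Lemma meas_matvec d (T : measurableType d) (R : realType) (N : nat)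
  (M : T -> 'M[R]_N) (v : T -> N.-tuple R) :
  (forall i j, measurable_fun setT (fun x => M x i j)) ->
  measurable_fun setT v -> measurable_fun setT (fun x => matvec (M x) (v x)).
Proof.
move=> mM mv; apply/measurable_fun_tnthP => i.
have -> : (@tnth _ R ^~ i \o (fun x => matvec (M x) (v x))) =
    (fun x => \sum_(j < N) M x i j * tnth (v x) j).
  by apply/funext => x /=; rewrite /matvec tnth_mktuple.
apply: measurable_sum => j; apply: measurable_realfun.measurable_funM; first exact: mM.
exact: (measurable_fun_tnthP v).1 mv j.
Qed.

Lemma meas_sqnorm d (T : measurableType d) (R : realType) (N : nat)
  (v : T -> N.-tuple R) :
  measurable_fun setT v -> measurable_fun setT (fun x => sqnorm (v x)).
Proof.
move=> mv; rewrite /sqnorm; apply: measurable_sum => i.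
apply: measurable_realfun.measurable_funX; exact: (measurable_fun_tnthP v).1 mv i.
Qed.

Lemma meas_cost (R : realType) (N K : nat)
  (L : N.-tuple R -> 'M[R]_N)
  (hL : forall i j : 'I_N, measurable_fun setT (fun a => L a i j))
  (G Ut : N.-tuple R * N.-tuple R -> N.-tuple R)
  (hG : measurable_fun setT G) (hUt : measurable_fun setT Ut)
  (C : 'I_K -> N.-tuple R -> N.-tuple R)
  (hC : forall j, measurable_fun setT (C j)) j :
  measurable_fun setT (cost L C G Ut j).
Proof.
rewrite /cost; apply: meas_sqnorm.
have mw := meas_vsub hG hUt.
apply: meas_vsub => //.
apply: (measurableT_comp (hC j)).
apply: meas_matvec => // i k.
exact: (measurableT_comp (hL i k) measurable_fst).
Qed.

Lemma bigmin_prop (R : realType) (I : eqType) (F : I -> R) (x0 : R) (s : seq I) :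
  (forall k, k \in s -> \big[Order.min/x0]_(k <- s) F k <= F k) /\
  (\big[Order.min/x0]_(k <- s) F k = x0 \/
    exists2 k, k \in s & \big[Order.min/x0]_(k <- s) F k = F k).
Proof.
elim: s => [|a s [IH1 IH2]]; first by rewrite big_nil; split => //; left.
rewrite big_cons; set m := \big[Order.min/x0]_(j <- s) F j in IH1 IH2 *.
split.
  move=> k; rewrite inE => /orP [/eqP ->|ks]; first by rewrite ge_min lexx.
  by rewrite ge_min (IH1 k ks) orbT.
rewrite {1 2}/Order.min; case: ifPn => h.
  by right; exists a => //; rewrite inE eqxx.
case: IH2 => [->|[k ks ->]]; first by left.
by right; exists k => //; rewrite inE ks orbT.
Qed.

Lemma meas_bigmin d (T : measurableType d) (R : realType) (I : Type)
  (F : I -> T -> R) (x0 : T -> R) (s : seq I) :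
  measurable_fun setT x0 -> (forall k, measurable_fun setT (F k)) ->
  measurable_fun setT (fun x => \big[Order.min/x0 x]_(k <- s) F k x).
Proof.
move=> m0 mF; elim: s => [|a s IH].
  by under eq_fun do rewrite big_nil.
under eq_fun do rewrite big_cons.
exact: (measurable_realfun.measurable_minr (mF a) IH).
Qed.

Lemma mEFin d (T : measurableType d) (R : realType) (f : T -> R) :
  measurable_fun setT f -> measurable_fun setT (fun x => (f x)%:E).
Proof. by move=> mf; apply/measurable_realfun.measurable_EFinP. Qed.

Lemma intDZ d (T : measurableType d) (R : realType) (mu : measure T R)
  (f h : T -> R) (k : R) : (forall x, 0 <= f x) -> (forall x, 0 <= h x) ->
  0 <= k -> measurable_fun setT f -> measurable_fun setT h ->
  (\int[mu]_x (f x + k * h x)%:E = \int[mu]_x (f x)%:E + k%:E * \int[mu]_x (h x)%:E)%E.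
Proof.
move=> f0 h0 k0 mf mh.
under eq_integral do rewrite EFinD.
rewrite ge0_integralD //; last 4 first.
- by move=> x _; rewrite lee_fin.
- exact: mEFin.
- by move=> x _; rewrite lee_fin mulr_ge0.
- by apply: mEFin; exact: measurable_realfun.measurable_funM (measurable_cst _) mh.
congr (_ + _)%E.
under eq_integral do rewrite EFinM.
rewrite ge0_integralZl_EFin //; first by move=> x _; rewrite lee_fin.
exact: mEFin.
Qed.

Lemma intcD d (T : measurableType d) (R : realType) (mu : probability T R)
  (f : T -> R) (t : R) : (forall x, 0 <= f x) -> 0 <= t ->
  measurable_fun setT f ->
  (\int[mu]_x (t + f x)%:E = t%:E + \int[mu]_x (f x)%:E)%E.
Proof.
move=> f0 t0 mf.
under eq_integral do rewrite EFinD.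
rewrite ge0_integralD //; try (by move=> x _; rewrite lee_fin);
  try exact: measurable_cst; try exact: mEFin.
have -> : (\int[mu]_x t%:E = t%:E * mu setT)%E by exact: integral_cst.
by rewrite probability_setT mule1.
Qed.

Lemma int_bound d (T : measurableType d) (R : realType) (mu : probability T R)
  (f : T -> R) (M : R) : (forall x, 0 <= f x) -> measurable_fun setT f ->
  {ae mu, forall x, f x <= M} ->
  (0 <= \int[mu]_x (f x)%:E /\ \int[mu]_x (f x)%:E <= `|M|%:E)%E.
Proof.
move=> f0 mf hM; split; first by apply: integral_ge0 => x _; rewrite lee_fin.
have -> : (`|M|%:E = \int[mu]_x (cst `|M|%:E x))%E.
  by rewrite integral_cst //= probability_setT mule1.
apply: ae_ge0_le_integral => //.
- by move=> x _; rewrite lee_fin.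
- exact: mEFin.
- by move=> x _; rewrite /= lee_fin.
apply: filterS hM => x hx _; rewrite /= lee_fin; apply: le_trans hx _.
exact: ler_norm.
Qed.

Unset Implicit Arguments. Set Strict Implicit.

Theorem theorem2 (R : realType) (N K : nat) (hN : (0 < N)%N) (hK : (0 < K)%N)
  (P : probability (N.-tuple R * N.-tuple R)%type R)
  (L : N.-tuple R -> 'M[R]_N)
  (hL : forall i j : 'I_N, measurable_fun setT (fun a => L a i j))
  (G Ut : N.-tuple R * N.-tuple R -> N.-tuple R)
  (hG : measurable_fun setT G) (hUt : measurable_fun setT Ut)
  (C : 'I_K -> N.-tuple R -> N.-tuple R)
  (hC : forall j, measurable_fun setT (C j))
  (Emin Ebar : R) (hEmin : 0 < Emin)
  (hbounds : {ae P, forall af,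
      (forall j : 'I_K, cost L C G Ut j af < Ebar) /\
      (exists j : 'I_K, Emin < cost L C G Ut j af)})
  (g : nat -> 'I_K -> N.-tuple R * N.-tuple R * N.-tuple R -> R)
  (hg : forall n, measurable_score (g n))
  (r : nat -> N.-tuple R * N.-tuple R * N.-tuple R -> 'I_K)
  (hr_meas : forall n, measurable_router (r n))
  (hr_argmax : forall n x, is_argmax (fun j => g n j x) (r n x))
  (hconv : psi_risk P (cost L C G Ut) Ut (g n) @[n --> \oo] -->
           psi_risk_star P (cost L C G Ut) Ut) :
  route_risk P (cost L C G Ut) Ut (r n) @[n --> \oo] -->
    route_risk_star P (cost L C G Ut) Ut.
Proof.
set c := cost L C G Ut.
have c0 k af : 0 <= c k af.
  by rewrite /c /cost /sqnorm; apply: sumr_ge0 => i _; exact: sqr_ge0.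
have mc k : measurable_fun setT (c k) by exact: meas_cost.
have minput : measurable_fun setT (input Ut).
  exact: measurable_fun_pair (measurable_fun_pair measurable_fst measurable_snd) hUt.
have mroute r' : measurable_router r' ->
    measurable_fun setT (fun af => route_loss (fun k => c k af) (r' (input Ut af))).
  move=> hr'; rewrite /route_loss; apply: measurable_sum => k.
  apply: measurable_realfun.measurable_funM; first exact: mc.
  have mA : measurable (input Ut @^-1` (r' @^-1` [set k])).
    by rewrite -[X in measurable X]setTI; apply: minput.
  have := measurable_realfun.measurable_indic (R:=R) (D:=setT) mA.
  apply: eq_measurable_fun => af _.
  rewrite indicE; congr (_%:R).
  by case: eqP => h; [rewrite mem_set | rewrite memNset].
have wtm (h : (N.-tuple R * N.-tuple R)%type -> 'I_K -> R) j : (forall k, measurable_fun setT (fun af => h af k)) ->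
    measurable_fun setT (fun af => wt (h af) j).
  move=> mh; rewrite /wt; apply: measurable_sum => k.
  exact: measurable_realfun.measurable_funM (mh k) (measurable_cst _).
have mpsi (h : 'I_K -> (N.-tuple R * N.-tuple R)%type -> R) : (forall j, measurable_fun setT (h j)) ->
    measurable_fun setT (fun af => psi_loss (fun k => c k af) (fun j => h j af)).
  move=> mh.
  have -> : (fun af => psi_loss (fun k => c k af) (fun j => h j af)) =
    (fun af => \sum_(j < K) wt (fun k => c k af) j *
        (ln (\sum_(m < K) expR (h m af)) - h j af)).
    apply/funext => af; rewrite psi_lossE -sumrN; apply: eq_bigr => j _.
    rewrite /sm ln_div; first by rewrite expRK; ring.
      by rewrite posrE expR_gt0.
    by rewrite posrE (bigD1 j) //= ltr_wpDr ?expR_gt0 // sumr_ge0 // => m _.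
  apply: measurable_sum => j; apply: measurable_realfun.measurable_funM.
    exact: wtm.
  apply: measurable_realfun.measurable_funB; last exact: mh.
  have ms : measurable_fun setT (fun af => \sum_(m < K) expR (h m af)).
    apply: measurable_sum => m.
    by apply: measurableT_comp; [exact: measurable_realfun.measurable_expR|exact: mh].
  by apply: measurableT_comp; [exact: measurable_realfun.measurable_ln|exact: ms].
pose X := (N.-tuple R * N.-tuple R)%type.
pose i0 : 'I_K := Ordinal hK.
pose cm (af : X) := \big[Order.min/c i0 af]_(k <- index_enum 'I_K) c k af.
have mcm : measurable_fun setT cm by apply: meas_bigmin.
have cmP af : exists jst, cm af = c jst af /\ forall k, c jst af <= c k af.
  have [h1 h2] := bigmin_prop (fun k => c k af) (c i0 af) (index_enum 'I_K).
  have hk k : cm af <= c k af by apply: h1; rewrite mem_index_enum.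
  case: h2 => [e|[k _ e]].
    by exists i0; split => // k; rewrite -e hk.
  by exists k; split => // k'; rewrite -e hk.
have cm0 af : 0 <= cm af by have [j [-> _]] := cmP af.
pose B := K%:R * (K%:R * `|Ebar|).
have B0 : 0 <= B by rewrite mulr_ge0 // mulr_ge0.
have WB af : (forall j, c j af < Ebar) -> Wt (fun k => c k af) <= B.
  move=> hb; rewrite /Wt /B.
  have -> : K%:R * (K%:R * `|Ebar|) = \sum_(j < K) (K%:R * `|Ebar|) :> R.
    by rewrite sumr_const card_ord mulr_natl.
  apply: ler_sum => j _; rewrite /wt.
  have -> : K%:R * `|Ebar| = \sum_(k < K) `|Ebar| :> R.
    by rewrite sumr_const card_ord mulr_natl.
  apply: ler_sum => k _.
  have h1 : c k af <= `|Ebar| by apply: le_trans (ltW (hb k)) (ler_norm _).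
  by case: (k != j); rewrite ?mulr1 ?mulr0 ?normr_ge0.
pose pst (af : X) := pstar (fun k => c k af).
have pst0 af : 0 <= pst af by apply: pstar_ge0.
have mwt j : measurable_fun setT (fun af : X => wt (fun k => c k af) j).
  by apply: wtm => k; exact: mc.
have mpst : measurable_fun setT pst.
  have -> : pst = (fun af => \sum_(j < K) wt (fun k => c k af) j *
      (ln (Wt (fun k => c k af)) - ln (wt (fun k => c k af) j))).
    apply/funext => af; rewrite /pst /pstar -sumrN; apply: eq_bigr => j _.
    set w := wt _ j; set W := Wt _.
    have [->|wn0] := eqVneq w 0; first by rewrite !mul0r oppr0.
    have wp : 0 < w by rewrite lt_neqAle eq_sym wn0 wt_ge0.
    have Wp : 0 < W by apply: lt_le_trans wp (wt_leW j _).
    by rewrite ln_div ?posrE // -mulrN opprB.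
  have mW : measurable_fun setT (fun af : X => Wt (fun k => c k af)).
    by rewrite /Wt; apply: measurable_sum => j; exact: mwt.
  apply: measurable_sum => j; apply: measurable_funM; first exact: mwt.
  apply: measurable_funB.
    by apply: measurableT_comp; [exact: measurable_ln|exact: mW].
  by apply: measurableT_comp; [exact: measurable_ln|exact: mwt].
have hbd : {ae P, forall af, forall j, c j af < Ebar}.
  by apply: filterS hbounds => af [].
pose fP n (af : X) := psi_loss (fun k => c k af) (fun j => g n j (input Ut af)).
have fP0 n af : 0 <= fP n af.
  by apply: le_trans (pst0 af) _; apply: psi_ge_pstar.
have mfP n : measurable_fun setT (fP n).
  apply: (mpsi (fun j af => g n j (input Ut af))) => j.
  by apply: measurableT_comp; [exact: hg|exact: minput].
pose cr n (af : X) := route_loss (fun k => c k af) (r n (input Ut af)).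
have cr0 n af : 0 <= cr n af by rewrite /cr route_lossE.
have mcr n : measurable_fun setT (cr n) by exact: mroute.
have fin_of (x : \bar R) (M : R) : (0 <= x)%E -> (x <= M%:E)%E -> x \is a fin_num.
  move=> x0 xM; rewrite ge0_fin_numE //; apply: le_lt_trans xM _; exact: ltey.
pose IA n := route_risk P c Ut (r n).
pose IM := (\int[P]_af (cm af)%:E)%E.
pose IQ := (\int[P]_af (pst af)%:E)%E.
have IAb n : (0 <= IA n /\ IA n <= `|Ebar|%:E)%E.
  apply: int_bound (cr0 n) (mcr n) _.
  by apply: filterS hbd => af hb; rewrite /cr route_lossE; exact: ltW.
have IAfin n : IA n \is a fin_num by have [h1 h2] := IAb n; exact: fin_of h1 h2.
have IMb : (0 <= IM /\ IM <= `|Ebar|%:E)%E.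
  apply: int_bound cm0 mcm _.
  apply: filterS hbd => af hb; have [j [-> hj]] := cmP af.
  exact: ltW.
have IMfin : IM \is a fin_num by have [h1 h2] := IMb; exact: fin_of h1 h2.
have IQb : (0 <= IQ /\ IQ <= `|K%:R * B|%:E)%E.
  apply: int_bound pst0 mpst _.
  apply: filterS hbd => af hb; apply: le_trans (pstar_le _) _ => //.
  by rewrite ler_wpM2l // WB.
have IQfin : IQ \is a fin_num by have [h1 h2] := IQb; exact: fin_of h1 h2.
have intle t n : 0 < t ->
    (IA n + (8 * B / t)%:E * IQ <= t%:E + IM + (8 * B / t)%:E * psi_risk P c Ut (g n))%E.
  move=> tp; set kk := 8 * B / t.
  have kk0 : 0 <= kk by rewrite /kk divr_ge0 ?mulr_ge0 // ltW.
  rewrite /IA /route_risk /IQ /IM /psi_risk.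
  rewrite -(intDZ P (f := cr n) (h := pst)) //.
  rewrite -(intcD P (f := cm) cm0 (ltW tp) mcm).
  rewrite -(intDZ P (f := fun af => t + cm af) (h := fP n)) //; last 2 first.
  - by move=> af; rewrite addr_ge0 // ltW.
  - by apply: measurable_funD => //; exact: measurable_cst.
  have t0 := ltW tp.
  apply: ae_ge0_le_integral => //.
  - by move=> af _; rewrite lee_fin; apply: addr_ge0; [exact: cr0|exact: mulr_ge0].
  - apply: mEFin; apply: measurable_funD => //.
    exact: measurable_funM (measurable_cst _) mpst.
  - move=> af _; rewrite lee_fin; apply: addr_ge0; last exact: mulr_ge0.
    by apply: addr_ge0.
  - apply: mEFin; apply: measurable_funD.
      by apply: measurable_funD => //; exact: measurable_cst.
    exact: measurable_funM (measurable_cst _) (mfP n).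
  apply: filterS hbd => af hb _; rewrite lee_fin.
  rewrite /cr route_lossE; have [jst [-> hj]] := cmP af.
  set r0 := r n (input Ut af).
  have hk := key_pt hK (c0^~ af) (hr_argmax n (input Ut af)) (hj r0).
  rewrite -/(fP n af) -/(pst af) in hk *.
  set E := fP n af - pst af in hk.
  have E0 : 0 <= E by rewrite subr_ge0; apply: psi_ge_pstar.
  have hW := WB af hb.
  set D := c r0 af - c jst af in hk.
  have D0 : 0 <= D by rewrite subr_ge0 hj.
  have h1 : D ^+ 2 <= 8 * B * E.
    apply: le_trans hk _; rewrite ler_wpM2r // ler_wpM2l //.
  have h2 : t * D <= t ^+ 2 + 8 * B * E.
    have : t * D <= t ^+ 2 + D ^+ 2 by nra.
    lra.
  have h3 : D <= t + kk * E.
    rewrite -(ler_pM2l tp); apply: le_trans h2 _.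
    rewrite /kk; have -> : t * (t + 8 * B / t * E) = t ^+ 2 + 8 * B * E.
      by field; rewrite gt_eqF.
    by [].
  rewrite /D /E in h3; lra.
pose PS := psi_risk_star P c Ut.
have PS0 : (0 <= PS)%E.
  apply/ereal_infP => y [g' _ <-]; apply: integral_ge0 => af _; rewrite lee_fin.
  by apply: le_trans (pst0 af) _; apply: psi_ge_pstar.
have PSQ : (PS <= IQ)%E.
  apply/lee_addgt0Pr => e ep.
  have Kp : 0 < K%:R :> R by rewrite ltr0n.
  pose eta := e / K%:R.
  have etap : 0 < eta by rewrite divr_gt0.
  pose ge (j : 'I_K) (x : X * N.-tuple R) := ln (wt (fun k => c k x.1) j + eta).
  have mge : measurable_score ge.
    move=> j; apply: measurableT_comp; first exact: measurable_ln.
    apply: measurable_funD; last exact: measurable_cst.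
    apply: measurable_sum => k; apply: measurable_funM; last exact: measurable_cst.
    by apply: measurableT_comp; [exact: mc|exact: measurable_fst].
  apply: (@le_trans _ _ (psi_risk P c Ut ge)).
    by apply: ge_ereal_inf; exists (psi_risk P c Ut ge) => //; exists ge.
  have -> : e = K%:R * eta by rewrite /eta mulrC divfK // gt_eqF.
  rewrite addeC /IQ -intcD //; last by rewrite mulr_ge0 // ltW.
  rewrite /psi_risk; apply: ge0_le_integral => //.
  - move=> af _; rewrite lee_fin.
    by apply: le_trans (pst0 af) _; apply: psi_ge_pstar.
  - apply: mEFin; apply: (mpsi (fun j af => ge j (input Ut af))) => j.
    by apply: measurableT_comp; [exact: mge|exact: minput].
  - apply: mEFin; apply: measurable_funD => //; exact: measurable_cst.
  move=> [a f] _; rewrite lee_fin /= addrC.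
  exact: psi_eta.
have PSfin : PS \is a fin_num.
  have [_ h2] := IQb; exact: fin_of PS0 (le_trans PSQ h2).
pose m := fine IM; pose q := fine IQ; pose ps := fine PS.
have IMe : IM = m%:E by rewrite /m fineK.
have IQe : IQ = q%:E by rewrite /q fineK.
have PSe : PS = ps%:E by rewrite /ps fineK.
have psq : ps <= q by rewrite -lee_fin -PSe -IQe.
have IAe n : IA n = (fine (IA n))%:E by rewrite fineK.
rewrite -/PS PSe in hconv.
move/fine_cvgP: hconv => [hfin hcv].
have claim t : 0 < t -> \forall n \near \oo, fine (IA n) <= m + 2 * t.
  move=> tp; pose kk := 8 * B / t.
  have kk0 : 0 <= kk by rewrite /kk divr_ge0 ?mulr_ge0 // ltW.
  pose eps := t / (kk + 1).
  have k1 : 0 < kk + 1 by rewrite ltr_wpDl.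
  have epsp : 0 < eps by rewrite divr_gt0.
  have keps : kk * eps <= t.
    rewrite /eps mulrA ler_pdivrMr // mulrDr mulr1 mulrC lerDl; exact: ltW.
  have H1 := (cvgrPdist_le _ _).1 hcv eps epsp.
  have H2 := hfin.
  near=> n.
  have h1 : `|ps - fine (psi_risk P c Ut (g n))| <= eps by near: n; exact: H1.
  have h2 : psi_risk P c Ut (g n) \is a fin_num by near: n; exact: H2.
  have h := intle t n tp.
  rewrite -/kk IAe IMe IQe -(fineK h2) -!EFinM -!EFinD lee_fin in h.
  set y := fine (psi_risk P c Ut (g n)) in h h1.
  have hy : y <= ps + eps by move: h1; rewrite ler_norml; lra.
  have : kk * (y - q) <= kk * eps by rewrite ler_wpM2l //; lra.
  lra.
Unshelve. 2: by end_near.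
have lowA n : m <= fine (IA n).
  rewrite -lee_fin -IMe -IAe /IM /IA /route_risk.
  apply: ge0_le_integral => //.
  - by move=> af _; rewrite lee_fin.
  - exact: mEFin.
  - exact: mEFin (mcr n).
  move=> af _; rewrite lee_fin route_lossE; have [jst [-> hj]] := cmP af.
  exact: hj.
have RSlow : (IM <= route_risk_star P c Ut)%E.
  apply/ereal_infP => y [r' hr' <-]; apply: ge0_le_integral => //.
  - by move=> af _; rewrite lee_fin.
  - exact: mEFin.
  - exact: mEFin (mroute r' hr').
  move=> af _; rewrite lee_fin route_lossE; have [jst [-> hj]] := cmP af.
  exact: hj.
have RSup n : (route_risk_star P c Ut <= IA n)%E.
  by apply: ge_ereal_inf; exists (IA n) => //; exists (r n) => //; exact: hr_meas.
have RSe : route_risk_star P c Ut = m%:E.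
  apply/eqP; rewrite eq_le -IMe RSlow andbT IMe.
  apply/lee_addgt0Pr => e ep.
  have e2 : 0 < e / 2 by rewrite divr_gt0.
  have [n hn] := filter_ex (claim (e / 2) e2).
  apply: le_trans (RSup n) _; rewrite IAe -EFinD lee_fin.
  by apply: le_trans hn _; lra.
rewrite RSe; apply/fine_cvgP; split.
  by apply: nearW => n; exact: IAfin.
apply/cvgrPdist_le => e ep.
have e2 : 0 < e / 2 by rewrite divr_gt0.
apply: filterS (claim (e / 2) e2) => n hn /=.
have := lowA n; rewrite -/(IA n) => hl.
rewrite ler0_norm ?subr_le0 // opprB; lra.
Qed.
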